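(* For every instance such that $K:=\pi_1+\pi_3+\pi_4-1\ge 1$ and $|S_2|\le K$, we have $H^{PW''}\le \tfrac{15}{8}H^*$.
   Context: An instance consists of an integer $n\ge 1$ and growth rates $1=h(1)\ge h(2)\ge\cdots\ge h(n)>0$ of bamboos $b_1,\dots,b_n$. Bamboo Garden Trimming (discrete version): - All heights are $0$ initially. - On each day $t=1,2,\dots$ every bamboo $b_j$ grows by $h(j)$. - At the end of each day the gardener cuts exactly one bamboo $\sigma(t)\in\{1,\dots,n\}$ back to height $0$. The height of a schedule $\sigma:\mathbb{N}\to\{1,\dots,n\}$ is the supremum, over all days $t$ and all $j$, of the height of $b_j$ at the end of day $t$ just before the cut. $H^*$ denotes the infimum of this height over all schedules. Value of algorithm PW'': - Split $\{1,\dots,n\}$ into four sets: - $S_1=\{j: \tfrac23<h(j)\le 1\}$; - $S_2=\{j:\tfrac12<h(j)\le\tfrac23\}$; - $S_3=\{j: h(j)\le\tfrac12 \text{ and } \tfrac23 2^{-k}<h(j)\le 2^{-k}\text{ for some integer }k\ge1\}$; - $S_4=\{j: h(j)\le\tfrac12\text{ and } 2^{-(k+1)}<h(j)\le \tfrac23 2^{-k}\text{ for some integer }k\ge 1\}$. - Modified growths: $h''(j)=2^{-k}$ for $j\in S_3$ and $h''(j)=\tfrac23 2^{-k}$ for $j\in S_4$, with $k$ as in the definition of the set. - Let $\pi_1=|S_1|$, $sh_3=\sum_{j\in S_3}h''(j)$, $sh_4=\sum_{j\in S_4}h''(j)$, $\pi_3=\lfloor sh_3\rfloor$, $\pi_4=\lfloor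 sh_4\rfloor$, $f_3=sh_3-\pi_3$, $f_4=sh_4-\pi_4$. - Option (a): $\pi_R(a)=\lceil f_3+f_4\rceil$ and $z(a)=\pi_1+|S_2|+\pi_3+\pi_4+\pi_R(a)$. - Option (b): if $S_2=\emptyset$ put $z(b)=+\infty$. Otherwise let $h^*=\max_{j\in S_2}h(j)$ and $f_2=\tfrac12$ if $|S_2|$ is odd, $f_2=0$ if $|S_2|$ is even. Then $\pi_R(b)=\lceil f_2+f_3+f_4\rceil$ and $z(b)=2h^*\,(\pi_1+\lfloor |S_2|/2\rfloor+\pi_3+\pi_4+\pi_R(b))$. - The value returned by algorithm PW'' is $H^{PW''}=\min\{z(a),z(b)\}$. The paper takes this as the maximum height of the periodic pinwheel trimming schedule that it builds from these partitions. *)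

(* Defs.v *)
From Stdlib Require Import Reals Lra Lia ZArith Arith List.
Open Scope R_scope.

(* Bamboos are indexed 1..n, growth rates h : nat -> R, days t = 1,2,...
   A schedule is sigma : nat -> nat; sigma t is the bamboo cut at the end of day t. *)

Definition valid_schedule (n : nat) (sigma : nat -> nat) : Prop :=
  forall t : nat, (1 <= t)%nat -> (1 <= sigma t <= n)%nat.

(* height of bamboo j at the end of day t, AFTER the cut of day t (t = 0: initial, 0) *)
Fixpoint post_height (h : nat -> R) (sigma : nat -> nat) (j t : nat) : R :=
  match t with
  | O => 0
  | S t' => if Nat.eqb (sigma (S t')) j then 0
            else post_height h sigma j t' + h j
  end.

(* height of bamboo j at the end of day t (t >= 1), just BEFORE the cut *)
Definition pre_height (h : nat -> R) (sigma : nat -> nat) (j t : nat) : R :=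
  post_height h sigma j (t - 1) + h j.

Definition heights (n : nat) (h : nat -> R) (sigma : nat -> nat) (x : R) : Prop :=
  exists t j : nat, (1 <= t)%nat /\ (1 <= j <= n)%nat /\ x = pre_height h sigma j t.

Definition schedule_height (n : nat) (h : nat -> R) (x : R) : Prop :=
  exists sigma : nat -> nat, valid_schedule n sigma /\ is_lub (heights n h sigma) x.

Definition is_glb (E : R -> Prop) (m : R) : Prop :=
  (forall x, E x -> m <= x) /\ (forall b, (forall x, E x -> b <= x) -> b <= m).

Definition instance (n : nat) (h : nat -> R) : Prop :=
  (1 <= n)%nat /\ h 1%nat = 1 /\
  (forall i j : nat, (1 <= i)%nat -> (i <= j)%nat -> (j <= n)%nat -> h j <= h i) /\
  0 < h n.

Definition Rfloor (x : R) : R := IZR (Int_part x).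
Definition Rceil (x : R) : R := - Rfloor (- x).

Definition Rltb (x y : R) : bool := if Rlt_dec x y then true else false.
Definition Rleb (x y : R) : bool := if Rle_dec x y then true else false.

Definition idx (n : nat) : list nat := seq 1 n.

Definition sumR (n : nat) (P : nat -> bool) (f : nat -> R) : R :=
  fold_right Rplus 0 (map f (filter P (idx n))).

Definition card (n : nat) (P : nat -> bool) : nat := length (filter P (idx n)).

Section PW.
Variables (n : nat) (h : nat -> R) (k : nat -> nat).
(* k j is, for h j <= 1/2, the integer k >= 1 with 2^-(k+1) < h j <= 2^-k *)

Definition inS1 (j : nat) : bool := Rltb (2/3) (h j).
Definition inS2 (j : nat) : bool := Rltb (1/2) (h j) && Rleb (h j) (2/3).
Definition inS3 (j : nat) : bool := Rleb (h j) (1/2) && Rltb (2/3 * / 2 ^ k j) (h j).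
Definition inS4 (j : nat) : bool := Rleb (h j) (1/2) && Rleb (h j) (2/3 * / 2 ^ k j).

Definition hpp3 (j : nat) : R := / 2 ^ k j.
Definition hpp4 (j : nat) : R := 2/3 * / 2 ^ k j.

Definition pi1 : R := INR (card n inS1).
Definition s2 : nat := card n inS2.
Definition sh3 : R := sumR n inS3 hpp3.
Definition sh4 : R := sumR n inS4 hpp4.
Definition pi3 : R := Rfloor sh3.
Definition pi4 : R := Rfloor sh4.
Definition f3 : R := sh3 - pi3.
Definition f4 : R := sh4 - pi4.

Definition z_a : R := pi1 + INR s2 + pi3 + pi4 + Rceil (f3 + f4).

Definition hstar : R := fold_right Rmax 0 (map h (filter inS2 (idx n))).
Definition f2 : R := if Nat.odd s2 then 1/2 else 0.
Definition z_b : R :=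
  2 * hstar * (pi1 + INR (Nat.div2 s2) + pi3 + pi4 + Rceil (f2 + f3 + f4)).

(* z(b) = +infinity when S2 is empty, so the minimum is then z(a) *)
Definition H_PW : R := if Nat.eqb s2 0 then z_a else Rmin z_a z_b.

End PW.

(* Main.v *)
Require Import Defs.
From Stdlib Require Import Reals.
From Stdlib Require Import Lra Lia List Arith ZArith.
Open Scope R_scope.

Definition sumL (l : list nat) (f : nat -> R) : R := fold_right Rplus 0 (map f l).

Lemma sumL_plus l f g : sumL l (fun j => f j + g j) = sumL l f + sumL l g.
Proof. induction l; unfold sumL in *; simpl; [ring|rewrite IHl; ring]. Qed.

Lemma sumL_le l f g : (forall j, In j l -> f j <= g j) -> sumL l f <= sumL l g.
Proof.
  induction l; unfold sumL in *; simpl; intros H; [lra|].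
  specialize (IHl (fun j Hj => H j (or_intror Hj))).
  specialize (H a (or_introl eq_refl)). lra.
Qed.

Lemma sumL_const l c : sumL l (fun _ => c) = INR (length l) * c.
Proof. induction l; unfold sumL in *; [simpl; ring | cbn [length map fold_right]; rewrite S_INR, IHl; ring]. Qed.

Lemma drop_sum_lt b : forall a c f, (c < a)%nat ->
  sumL (seq a b) (fun j => if Nat.eqb c j then 0 else f j) = sumL (seq a b) f.
Proof.
  induction b; intros a c f Hc; unfold sumL in *; simpl; auto.
  rewrite IHb by lia. destruct (Nat.eqb_spec c a); [lia|reflexivity].
Qed.

Lemma drop_sum b : forall a c f, (a <= c < a + b)%nat ->
  sumL (seq a b) (fun j => if Nat.eqb c j then 0 else f j) = sumL (seq a b) f - f c.
Proof.
  induction b; intros a c f Hc; [lia|].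
  simpl seq. unfold sumL in *; simpl.
  destruct (Nat.eqb_spec c a).
  - subst. pose proof (drop_sum_lt b (S a) a f ltac:(lia)). unfold sumL in H.
    rewrite H. ring.
  - rewrite IHb by lia. ring.
Qed.

Section Dens.
Variables (n : nat) (h : nat -> R) (sigma : nat -> nat) (x : R).
Hypothesis Hpos : forall j, (1 <= j <= n)%nat -> 0 < h j.
Hypothesis Hn1 : (1 <= n)%nat.
Hypothesis Hval : valid_schedule n sigma.
Hypothesis Hub : forall t j, (1 <= t)%nat -> (1 <= j <= n)%nat -> pre_height h sigma j t <= x.

Definition Phi t := sumL (seq 1 n) (fun j => post_height h sigma j t).

Lemma Phi_step t : Phi (S t) >= Phi t + sumL (seq 1 n) h - x.
Proof.
  unfold Phi.
  pose proof (Hval (S t) ltac:(lia)) as Hs.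
  assert (E : sumL (seq 1 n) (fun j => post_height h sigma j (S t)) =
     sumL (seq 1 n) (fun j => post_height h sigma j t + h j)
     - (post_height h sigma (sigma (S t)) t + h (sigma (S t)))).
  { rewrite <- (drop_sum n 1 (sigma (S t)) (fun j => post_height h sigma j t + h j)) by lia.
    reflexivity. }
  rewrite E, sumL_plus.
  pose proof (Hub (S t) (sigma (S t)) ltac:(lia) Hs) as Hb.
  unfold pre_height in Hb. replace (S t - 1)%nat with t in Hb by lia. lra.
Qed.

Lemma Phi_lower T : Phi T >= INR T * (sumL (seq 1 n) h - x).
Proof.
  induction T.
  - unfold Phi. change (fun j => post_height h sigma j 0) with (fun _:nat => 0).
    rewrite sumL_const. simpl; lra.
  - pose proof (Phi_step T). rewrite S_INR. lra.
Qed.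

Lemma Phi_upper T : Phi T <= INR n * x.
Proof.
  unfold Phi. rewrite <- (length_seq n 1) at 2. rewrite <- sumL_const.
  apply sumL_le. intros j Hj. apply in_seq in Hj.
  pose proof (Hub (S T) j ltac:(lia) ltac:(lia)) as Hb.
  unfold pre_height in Hb. replace (S T - 1)%nat with T in Hb by lia.
  pose proof (Hpos j ltac:(lia)). lra.
Qed.

Lemma density : sumL (seq 1 n) h <= x.
Proof.
  destruct (Rle_dec (sumL (seq 1 n) h) x) as [|Hn]; auto.
  exfalso. set (d := sumL (seq 1 n) h - x).
  assert (Hd : 0 < d) by (unfold d; lra).
  assert (Hx : 0 <= x).
  { pose proof (Hub 1 1 ltac:(lia) ltac:(lia)) as Hb. unfold pre_height in Hb. simpl in Hb.
    pose proof (Hpos 1 ltac:(lia)). lra. }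
  destruct (archimed (INR n * x / d)) as [Hu _].
  set (T := Z.to_nat (up (INR n * x / d))).
  assert (HT : INR n * x / d < INR T).
  { unfold T. rewrite (INR_IZR_INZ (Z.to_nat _)), Z2Nat.id. lra.
    apply le_IZR. pose proof (pos_INR n).
    assert (0 <= INR n * x / d). { apply Rmult_le_pos; [apply Rmult_le_pos|]; auto. left; apply Rinv_0_lt_compat; auto. }
    lra. }
  pose proof (Phi_lower T). pose proof (Phi_upper T).
  assert (INR n * x < INR T * d).
  { replace (INR n * x) with (INR n * x / d * d) by (field; lra).
    apply Rmult_lt_compat_r; auto. }
  fold d in H. lra.
Qed.
End Dens.

Definition wt (h : nat -> R) (k : nat -> nat) (j : nat) : R :=
  (if inS1 h j then 2/3 else 0) + (if inS2 h j then 1/2 else 0) +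
  (if inS3 h k j then 2/3 * hpp3 k j else 0) + (if inS4 h k j then 2/3 * hpp4 k j else 0).

Lemma sum_wt h k l : sumL l (wt h k) =
  2/3 * INR (length (filter (inS1 h) l)) + 1/2 * INR (length (filter (inS2 h) l)) +
  2/3 * fold_right Rplus 0 (map (hpp3 k) (filter (inS3 h k) l)) +
  2/3 * fold_right Rplus 0 (map (hpp4 k) (filter (inS4 h k) l)).
Proof.
  induction l; [unfold sumL; simpl; ring|].
  unfold sumL in *. cbn [map fold_right filter]. rewrite IHl. unfold wt.
  destruct (inS1 h a), (inS2 h a), (inS3 h k a), (inS4 h k a);
   cbn [length map fold_right]; rewrite ?S_INR; ring.
Qed.

Lemma wt_le h k j : 0 < h j ->
  (h j <= 1/2 -> / 2 ^ (S (k j)) < h j <= / 2 ^ k j) ->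
  wt h k j + (if Rlt_dec (2/3) (h j) then 1/3 * (h j - 2/3) * 3 else 0) <= h j.
Proof.
  intros Hp Hk. unfold wt, inS1, inS2, inS3, inS4, Rltb, Rleb, hpp3, hpp4.
  assert (Hq : 0 < / 2 ^ k j) by (apply Rinv_0_lt_compat, pow_lt; lra).
  assert (Eq : / 2 ^ S (k j) = / 2 ^ k j * / 2).
  { simpl. rewrite Rinv_mult. ring. }
  rewrite Eq in Hk. set (q := / 2 ^ k j) in *.
  destruct (Rle_dec (h j) (1/2)) as [Hle|Hle].
  - specialize (Hk Hle).
    destruct (Rlt_dec (2/3) (h j)); [lra|].
    destruct (Rlt_dec (1/2) (h j)); [lra|].
    destruct (Rlt_dec (2/3 * q) (h j)); destruct (Rle_dec (h j) (2/3 * q)); simpl; lra.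
  - destruct (Rlt_dec (2/3) (h j)); destruct (Rlt_dec (1/2) (h j));
    destruct (Rle_dec (h j) (2/3)); simpl; lra.
Qed.

Theorem proposition2 (n : nat) (h : nat -> R) (k : nat -> nat) (Hstar : R) :
  instance n h ->
  (forall j : nat, (1 <= j <= n)%nat -> h j <= 1/2 ->
     (1 <= k j)%nat /\ / 2 ^ (S (k j)) < h j <= / 2 ^ k j) ->
  is_glb (schedule_height n h) Hstar ->
  pi1 n h + pi3 n h k + pi4 n h k - 1 >= 1 ->
  INR (s2 n h) <= pi1 n h + pi3 n h k + pi4 n h k - 1 ->
  H_PW n h k <= 15/8 * Hstar.
Proof.
  intros [Hn1 [Hh1 [Hmono Hhn]]] Hk Hglb HP Hs.
  assert (Hpos : forall j, (1 <= j <= n)%nat -> 0 < h j).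
  { intros j Hj. pose proof (Hmono j n ltac:(lia) ltac:(lia) ltac:(lia)). lra. }
  assert (HS : 1/3 + sumL (seq 1 n) (wt h k) <= sumL (seq 1 n) h).
  { destruct n as [|m]; [lia|]. simpl seq. unfold sumL; cbn [map fold_right]. fold (sumL (seq 2 m) (wt h k)).
    fold (sumL (seq 2 m) h).
    assert (sumL (seq 2 m) (wt h k) <= sumL (seq 2 m) h).
    { apply sumL_le. intros j Hj. apply in_seq in Hj.
      assert (Hj' : (1 <= j <= S m)%nat) by lia.
      pose proof (wt_le h k j (Hpos j Hj') (fun H => proj2 (Hk j Hj' H))).
      destruct (Rlt_dec (2/3) (h j)); lra. }
    pose proof (wt_le h k 1%nat (Hpos 1%nat ltac:(lia)) (fun H => proj2 (Hk 1%nat ltac:(lia) H))).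
    rewrite Hh1 in H0 |- *. destruct (Rlt_dec (2/3) 1); lra. }
  rewrite sum_wt in HS.
  assert (Hall : forall x, schedule_height n h x -> 8/15 * H_PW n h k <= x).
  { intros x [sigma [Hv [Hub _]]].
    assert (Hd : sumL (seq 1 n) h <= x).
    { apply (density n h sigma x Hpos Hn1 Hv).
      intros t j Ht Hj. apply Hub. exists t, j. auto. }
    assert (Hz : H_PW n h k <= z_a n h k).
    { unfold H_PW. destruct (Nat.eqb (s2 n h) 0); [lra|apply Rmin_l]. }
    unfold z_a, f3, f4, pi3, pi4, Rceil, Rfloor in *.
    unfold pi1, s2, sh3, sh4, card, sumR, idx in *.
    set (A := INR (length (filter (inS1 h) (seq 1 n)))) in *.
    set (B := INR (length (filter (inS2 h) (seq 1 n)))) in *.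
    set (C := fold_right Rplus 0 (map (hpp3 k) (filter (inS3 h k) (seq 1 n)))) in *.
    set (D := fold_right Rplus 0 (map (hpp4 k) (filter (inS4 h k) (seq 1 n)))) in *.
    pose proof (base_Int_part C). pose proof (base_Int_part D).
    pose proof (base_Int_part (- (C - IZR (Int_part C) + (D - IZR (Int_part D))))).
    lra. }
  destruct Hglb as [_ Hg]. specialize (Hg _ Hall). lra.
Qed.
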